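(* Let $\boldsymbol{\omega}:\mathbb{R}^3\to\mathbb{R}^3$ be a smooth divergence-free vorticity field, let $\boldsymbol{a},\boldsymbol{c}\in\mathbb{R}^3$, and let $\boldsymbol{B}$ be a vortex filament, i.e. a closed streamline of $\boldsymbol{\omega}$ parametrized by a $T$-periodic curve $\boldsymbol{\gamma}:\mathbb{R}\to\mathbb{R}^3$ with $\boldsymbol{\gamma}'(s)=\boldsymbol{\omega}(\boldsymbol{\gamma}(s))$, with $\boldsymbol{a},\boldsymbol{c}\notin\boldsymbol{B}$ and $\boldsymbol{a}\neq\boldsymbol{c}$. With $D$ as defined in the context, \[\int_0^T D(\boldsymbol{a},\boldsymbol{\gamma}(s),\boldsymbol{c})\,ds=-\int_0^T D(\boldsymbol{c},\boldsymbol{\gamma}(s),\boldsymbol{a})\,ds,\] that is, in coordinates advecting with the fluid, $\boldsymbol{a}$'s action on $\boldsymbol{B}$ affects the interaction energy between $\boldsymbol{B}$ and $\boldsymbol{c}$ in an exactly equal and opposite way as $\boldsymbol{c}$'s action on $\boldsymbol{B}$ affects the interaction energy between $\boldsymbol{a}$ and $\boldsymbol{B}$.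
   Context: Interaction energy: for vorticity vectors $\boldsymbol{\beta},\boldsymbol{\gamma}_0\in\mathbb{R}^3$ at points $\boldsymbol{b},\boldsymbol{c}$ (distinct), \[I(\boldsymbol{\beta},\boldsymbol{\gamma}_0,\boldsymbol{c}-\boldsymbol{b})=\frac{1}{16\pi\|\boldsymbol{c}-\boldsymbol{b}\|}\Big[\boldsymbol{\beta}\cdot\boldsymbol{\gamma}_0+\frac{(\boldsymbol{\beta}\cdot(\boldsymbol{c}-\boldsymbol{b}))(\boldsymbol{\gamma}_0\cdot(\boldsymbol{c}-\boldsymbol{b}))}{\|\boldsymbol{c}-\boldsymbol{b}\|^2}\Big]\] (this is the contribution of the pair to the kinetic energy $\frac12\int\|\boldsymbol{u}\|^2$ obtained via the Biot–Savart law). The velocity induced at a point $\boldsymbol{b}$ by the vorticity at $\boldsymbol{a}$ is $\boldsymbol{v}_{\boldsymbol{a}}(\boldsymbol{b})=\frac{1}{4\pi}\frac{\boldsymbol{\omega}(\boldsymbol{a})\times(\boldsymbol{b}-\boldsymbol{a})}{\|\boldsymbol{a}-\boldsymbol{b}\|^3}$. Under the vorticity form of the 3D Euler equations (in coordinates advecting with the fluid), this velocity moves $\boldsymbol{b}$ at rate $\boldsymbol{v}_{\boldsymbol{a}}(\boldsymbol{b})$ and changes the vorticity at $\boldsymbol{b}$ at rate $(\boldsymbol{\omega}(\boldsymbol{b})\cdot\nabla_{\boldsymbol{b}})\boldsymbol{v}_{\boldsymbol{a}}(\boldsymbol{b})$. The effect of $\boldsymbol{a}$'s action on $\boldsymbol{b}$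 on the interaction energy between $\boldsymbol{b}$ and $\boldsymbol{c}$ is the resulting rate of change of $I(\boldsymbol{\omega}(\boldsymbol{b}),\boldsymbol{\omega}(\boldsymbol{c}),\boldsymbol{c}-\boldsymbol{b})$ with $\boldsymbol{c},\boldsymbol{\omega}(\boldsymbol{c})$ held fixed: \[D(\boldsymbol{a},\boldsymbol{b},\boldsymbol{c})=\nabla_{\boldsymbol{b}}I(\boldsymbol{\beta},\boldsymbol{\omega}(\boldsymbol{c}),\boldsymbol{c}-\boldsymbol{b})\big|_{\boldsymbol{\beta}=\boldsymbol{\omega}(\boldsymbol{b})}\cdot\boldsymbol{v}_{\boldsymbol{a}}(\boldsymbol{b})+\nabla_{\boldsymbol{\beta}}I(\boldsymbol{\beta},\boldsymbol{\omega}(\boldsymbol{c}),\boldsymbol{c}-\boldsymbol{b})\big|_{\boldsymbol{\beta}=\boldsymbol{\omega}(\boldsymbol{b})}\cdot\big((\boldsymbol{\omega}(\boldsymbol{b})\cdot\nabla_{\boldsymbol{b}})\boldsymbol{v}_{\boldsymbol{a}}(\boldsymbol{b})\big),\] where in the first term the gradient in the position $\boldsymbol{b}$ is taken with the vorticity argument $\boldsymbol{\beta}$ held fixed. *)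

(* Defs.v *)
From Stdlib Require Import Reals List.
From Coquelicot Require Import Coquelicot.
Open Scope R_scope.

Record V3 := mkV3 { vx : R; vy : R; vz : R }.

Inductive idx := I0 | I1 | I2.

Definition coord (i : idx) (v : V3) : R :=
  match i with I0 => vx v | I1 => vy v | I2 => vz v end.

Definition basis (i : idx) : V3 :=
  match i with I0 => mkV3 1 0 0 | I1 => mkV3 0 1 0 | I2 => mkV3 0 0 1 end.

Definition vadd (u v : V3) : V3 := mkV3 (vx u + vx v) (vy u + vy v) (vz u + vz v).
Definition vscale (k : R) (v : V3) : V3 := mkV3 (k * vx v) (k * vy v) (k * vz v).
Definition vsub (u v : V3) : V3 := mkV3 (vx u - vx v) (vy u - vy v) (vz u - vz v).
Definition dot (u v : V3) : R := vx u * vx v + vy u * vy v + vz u * vz v.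
Definition cross (u v : V3) : V3 :=
  mkV3 (vy u * vz v - vz u * vy v)
       (vz u * vx v - vx u * vz v)
       (vx u * vy v - vy u * vx v).
Definition vnorm (v : V3) : R := sqrt (dot v v).

Definition vec_of (f : idx -> R) : V3 := mkV3 (f I0) (f I1) (f I2).

Definition partial (g : V3 -> R) (i : idx) (p : V3) : R :=
  Derive (fun t => g (vadd p (vscale t (basis i)))) 0.

Definition has_partial (g : V3 -> R) (i : idx) (p : V3) : Prop :=
  ex_derive (fun t => g (vadd p (vscale t (basis i)))) 0.

Fixpoint iter_partial (l : list idx) (g : V3 -> R) : V3 -> R :=
  match l with
  | nil => g
  | i :: l' => partial (iter_partial l' g) i
  end.

Definition cont_at (g : V3 -> R) (p : V3) : Prop :=
  forall eps, 0 < eps -> exists delta, 0 < delta /\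
    forall q, vnorm (vsub q p) < delta -> Rabs (g q - g p) < eps.

Definition smooth_scalar (g : V3 -> R) : Prop :=
  forall l : list idx,
    (forall p, cont_at (iter_partial l g) p) /\
    (forall i p, has_partial (iter_partial l g) i p).

Definition smooth_field (w : V3 -> V3) : Prop :=
  forall j, smooth_scalar (fun p => coord j (w p)).

Definition div_free (w : V3 -> V3) : Prop :=
  forall p, partial (fun q => vx (w q)) I0 p
          + partial (fun q => vy (w q)) I1 p
          + partial (fun q => vz (w q)) I2 p = 0.

(** Interaction energy I(beta, gamma0, r), r = c - b. *)
Definition Ienergy (beta g0 r : V3) : R :=
  / (16 * PI * vnorm r) *
  (dot beta g0 + dot beta r * dot g0 r / (vnorm r ^ 2)).

(** Velocity induced at b by the vorticity at a. *)
Definition vel (w : V3 -> V3) (a b : V3) : V3 :=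
  vscale (/ (4 * PI) * / (vnorm (vsub a b) ^ 3)) (cross (w a) (vsub b a)).

Definition Dterm (w : V3 -> V3) (a b c : V3) : R :=
  (* gradient in position b, vorticity argument beta = w b held fixed *)
  let grad_b := vec_of (fun i =>
        partial (fun b' => Ienergy (w b) (w c) (vsub c b')) i b) in
  let grad_beta := vec_of (fun i =>
        partial (fun beta => Ienergy beta (w c) (vsub c b)) i (w b)) in
  let stretch := vec_of (fun j =>
        coord I0 (w b) * partial (fun b' => coord j (vel w a b')) I0 b
      + coord I1 (w b) * partial (fun b' => coord j (vel w a b')) I1 b
      + coord I2 (w b) * partial (fun b' => coord j (vel w a b')) I2 b) in
  dot grad_b (vel w a b) + dot grad_beta stretch.

(* Main.v *)
Require Import Defs.
From Stdlib Require Import Reals.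
From Coquelicot Require Import Coquelicot.
From Stdlib Require Import Lra.
Open Scope R_scope.

Definition gradbI (be C r e : V3) : R :=
  / (16 * PI) * ( dot be C * dot r e / vnorm r ^ 3
   - (dot be e * dot C r + dot be r * dot C e) / vnorm r ^ 3
   + 3 * dot be r * dot C r * dot r e / vnorm r ^ 5).

Definition dvel (A a b e : V3) : V3 :=
  vscale (/ (4 * PI)) (vadd (vscale (/ vnorm (vsub a b) ^ 3) (cross A e))
     (vscale (- 3 * dot (vsub b a) e / vnorm (vsub a b) ^ 5) (cross A (vsub b a)))).

Lemma dot_pos (u v : V3) : u <> v -> 0 < dot (vsub u v) (vsub u v).
Proof.
  intros H. destruct u as [vx0 vy0 vz0], v as [vx1 vy1 vz1]; unfold dot, vsub; simpl.
  destruct (Req_dec vx0 vx1); destruct (Req_dec vy0 vy1); destruct (Req_dec vz0 vz1);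
  try (subst; exfalso; apply H; reflexivity); 
  try (assert (0 < (vx0 - vx1) * (vx0 - vx1)) by (apply Rsqr_pos_lt; lra));
  try (assert (0 < (vy0 - vy1) * (vy0 - vy1)) by (apply Rsqr_pos_lt; lra));
  try (assert (0 < (vz0 - vz1) * (vz0 - vz1)) by (apply Rsqr_pos_lt; lra)); nra.
Qed.

Ltac side := repeat split; auto; try (apply Rgt_not_eq; repeat apply Rmult_lt_0_compat; lra); nra.

Lemma d_Ib (be C c b e : V3) : c <> b ->
  is_derive (fun t => Ienergy be C (vsub c (vadd b (vscale t e)))) 0 (gradbI be C (vsub c b) e).
Proof.
  intros H0. pose proof (dot_pos _ _ H0) as H.
  destruct be, C, c, b, e. unfold gradbI, Ienergy, vnorm, dot, vsub, vadd, vscale in *; simpl in *.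
  unfold Rminus in *.
  assert (Hs : 0 < sqrt ((vx1 + - vx2) * (vx1 + - vx2) + (vy1 + - vy2) * (vy1 + - vy2) + (vz1 + - vz2) * (vz1 + - vz2))) by (apply sqrt_lt_R0; auto).
  assert (HP := PI_RGT_0).
  auto_derive; rewrite ?Rmult_0_l, ?Rplus_0_r.
  - side.
  - set (n := sqrt _) in *. field. lra.
Qed.

Lemma d_Ibeta (be C r e : V3) : 0 < dot r r ->
  is_derive (fun t => Ienergy (vadd be (vscale t e)) C r) 0 (Ienergy e C r).
Proof.
  intros H.
  destruct be, C, r, e. unfold Ienergy, vnorm, dot, vsub, vadd, vscale in *; simpl in *.
  assert (Hs : 0 < sqrt (vx1 * vx1 + vy1 * vy1 + vz1 * vz1)) by (apply sqrt_lt_R0; auto).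
  assert (HP := PI_RGT_0).
  auto_derive; rewrite ?Rmult_0_l, ?Rplus_0_r.
  - side.
  - set (n := sqrt _) in *. field. lra.
Qed.

Lemma d_vel (w : V3 -> V3) (a b e : V3) j : a <> b ->
  is_derive (fun t => coord j (vel w a (vadd b (vscale t e)))) 0 (coord j (dvel (w a) a b e)).
Proof.
  intros H0. pose proof (dot_pos _ _ H0) as H.
  unfold vel, dvel. destruct (w a) as [A0 A1 A2].
  destruct a, b, e. unfold vnorm, dot, vsub, vadd, vscale, cross in *; simpl in *.
  unfold Rminus in *.
  assert (Hs : 0 < sqrt ((vx + - vx0) * (vx + - vx0) + (vy + - vy0) * (vy + - vy0) + (vz + - vz0) * (vz + - vz0))) by (apply sqrt_lt_R0; auto).
  assert (HP := PI_RGT_0).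
  destruct j; simpl;
  auto_derive; rewrite ?Rmult_0_l, ?Rplus_0_r;
  [ side | set (n := sqrt _) in *; field; lra | side | set (n := sqrt _) in *; field; lra | side | set (n := sqrt _) in *; field; lra].
Qed.

Definition DE (w : V3 -> V3) (a b c : V3) : R :=
  dot (vec_of (fun i => gradbI (w b) (w c) (vsub c b) (basis i))) (vel w a b)
  + dot (vec_of (fun i => Ienergy (basis i) (w c) (vsub c b))) (dvel (w a) a b (w b)).

Lemma Dterm_eq w a b c : a <> b -> c <> b -> Dterm w a b c = DE w a b c.
Proof.
  intros Hab Hcb.
  assert (E1 : forall i, partial (fun b' => Ienergy (w b) (w c) (vsub c b')) i b
                = gradbI (w b) (w c) (vsub c b) (basis i)).
  { intros i. unfold partial. apply is_derive_unique. apply d_Ib; auto. }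
  assert (E2 : forall i, partial (fun beta => Ienergy beta (w c) (vsub c b)) i (w b)
                = Ienergy (basis i) (w c) (vsub c b)).
  { intros i. unfold partial. apply is_derive_unique. apply d_Ibeta. apply dot_pos; auto. }
  assert (E3 : forall i j, partial (fun b' => coord j (vel w a b')) i b
                = coord j (dvel (w a) a b (basis i))).
  { intros i j. unfold partial. apply is_derive_unique. apply d_vel; auto. }
  unfold Dterm, DE. cbv zeta.
  assert (Hv : forall f g : idx -> R, (forall i, f i = g i) -> vec_of f = vec_of g).
  { intros f g Hfg. unfold vec_of. rewrite !Hfg. reflexivity. }
  rewrite (Hv _ _ E1), (Hv _ _ E2).
  f_equal. f_equal.
  transitivity (vec_of (fun j => coord j (dvel (w a) a b (w b)))).
  2:{ destruct (dvel (w a) a b (w b)); reflexivity. }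
  apply Hv. intros j. rewrite !E3.
  destruct (w a) as [A0 A1 A2], (w b) as [B0 B1 B2].
  assert (Hn : 0 < vnorm (vsub a b)) by (apply sqrt_lt_R0, dot_pos; auto).
  assert (HP := PI_RGT_0).
  unfold dvel. set (n := vnorm (vsub a b)) in *.
  unfold vec_of, dot, vsub, vadd, vscale, cross, basis; simpl.
  destruct j; simpl; field; lra.
Qed.

Ltac pos := match goal with
  | |- 0 < _ * _ => apply Rmult_lt_0_compat; pos
  | |- 0 < / _ => apply Rinv_0_lt_compat; pos
  | _ => first [assumption | lra]
  end.
Ltac nz := apply Rgt_not_eq, Rlt_gt; pos.

Definition G (w : V3 -> V3) (a c b : V3) : R :=
  Ienergy (vel w a b) (w c) (vsub c b) + Ienergy (vel w c b) (w a) (vsub a b).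

Lemma dG_gen (w : V3 -> V3) (a c : V3) (X Y Z : R -> R) s p q r :
  is_derive X s p -> is_derive Y s q -> is_derive Z s r ->
  w (mkV3 (X s) (Y s) (Z s)) = mkV3 p q r ->
  mkV3 (X s) (Y s) (Z s) <> a -> mkV3 (X s) (Y s) (Z s) <> c ->
  is_derive (fun t => G w a c (mkV3 (X t) (Y t) (Z t))) s
    (DE w a (mkV3 (X s) (Y s) (Z s)) c + DE w c (mkV3 (X s) (Y s) (Z s)) a).
Proof.
  intros HX HY HZ Hw Ha Hc.
  assert (Ha' := dot_pos _ _ (not_eq_sym Ha)).
  assert (Hc' := dot_pos _ _ (not_eq_sym Hc)).
  assert (D0 : Derive X s = p) by (apply is_derive_unique; auto).
  assert (D1 : Derive Y s = q) by (apply is_derive_unique; auto).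
  assert (D2 : Derive Z s = r) by (apply is_derive_unique; auto).
  assert (X0 : ex_derive X s) by (eexists; eauto).
  assert (X1 : ex_derive Y s) by (eexists; eauto).
  assert (X2 : ex_derive Z s) by (eexists; eauto).
  unfold G, DE, gradbI, dvel, vel. rewrite Hw.
  destruct (w a) as [A0 A1 A2], (w c) as [C0 C1 C2], a as [a0 a1 a2], c as [c0 c1 c2].
  unfold vec_of, Ienergy, vnorm, dot, vsub, vadd, vscale, cross, basis in *; simpl in *.
  unfold Rminus in *.
  assert (HP := PI_RGT_0).
  assert (Hna := sqrt_lt_R0 _ Ha'). assert (Hnc := sqrt_lt_R0 _ Hc').
  change (Derive X s = p) with (Derive (fun x => X x) s = p) in D0.
  change (Derive Y s = q) with (Derive (fun x => Y x) s = q) in D1.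
  change (Derive Z s = r) with (Derive (fun x => Z x) s = r) in D2.
  auto_derive.
  - repeat split; auto; try nz.
  - rewrite ?D0, ?D1, ?D2.
    set (x := X s) in *. set (y := Y s) in *. set (z := Z s) in *.
    set (na := sqrt ((a0 + - x) * (a0 + - x) + (a1 + - y) * (a1 + - y) + (a2 + - z) * (a2 + - z))) in *.
    set (nc := sqrt ((c0 + - x) * (c0 + - x) + (c1 + - y) * (c1 + - y) + (c2 + - z) * (c2 + - z))) in *.
    field. repeat split; nz.
Qed.

Definition DE' (A Bt C a b c : V3) : R :=
  dot (vec_of (fun i => gradbI Bt C (vsub c b) (basis i)))
      (vscale (/ (4 * PI) * / (vnorm (vsub a b) ^ 3)) (cross A (vsub b a)))
  + dot (vec_of (fun i => Ienergy (basis i) C (vsub c b))) (dvel A a b Bt).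

Lemma DE_DE' w a b c : DE w a b c = DE' (w a) (w b) (w c) a b c.
Proof. reflexivity. Qed.

Lemma DE'_lin A Bt C a b c : b <> a -> b <> c ->
  DE' A Bt C a b c = vx Bt * DE' A (basis I0) C a b c + vy Bt * DE' A (basis I1) C a b c
                     + vz Bt * DE' A (basis I2) C a b c.
Proof.
  intros Ha Hc.
  assert (Ha' := sqrt_lt_R0 _ (dot_pos _ _ (not_eq_sym Ha))).
  assert (Hc' := sqrt_lt_R0 _ (dot_pos _ _ (not_eq_sym Hc))).
  assert (HP := PI_RGT_0).
  unfold DE', gradbI, dvel, Ienergy.
  change (sqrt (dot (vsub a b) (vsub a b))) with (vnorm (vsub a b)) in Ha'.
  change (sqrt (dot (vsub c b) (vsub c b))) with (vnorm (vsub c b)) in Hc'.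
  set (na := vnorm (vsub a b)) in *. set (nc := vnorm (vsub c b)) in *.
  destruct A, Bt, C, a, b, c.
  unfold vec_of, dot, vsub, vadd, vscale, cross, basis; simpl.
  field. repeat split; nz.
Qed.

Lemma DE'_exd A E C a c (X Y Z : R -> R) s :
  ex_derive X s -> ex_derive Y s -> ex_derive Z s ->
  mkV3 (X s) (Y s) (Z s) <> a -> mkV3 (X s) (Y s) (Z s) <> c ->
  ex_derive (fun t => DE' A E C a (mkV3 (X t) (Y t) (Z t)) c) s.
Proof.
  intros X0 X1 X2 Ha Hc.
  assert (Ha' := dot_pos _ _ (not_eq_sym Ha)).
  assert (Hc' := dot_pos _ _ (not_eq_sym Hc)).
  unfold DE', gradbI, dvel, Ienergy.
  destruct A, E, C, a, c.
  unfold vec_of, vnorm, dot, vsub, vadd, vscale, cross, basis in *; simpl in *.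
  unfold Rminus in *.
  assert (HP := PI_RGT_0).
  assert (Hna := sqrt_lt_R0 _ Ha'). assert (Hnc := sqrt_lt_R0 _ Hc').
  auto_derive. repeat split; auto; try nz.
Qed.

Lemma ball_R (x e y : R) : ball x e y <-> Rabs (y - x) < e.
Proof. reflexivity. Qed.

Lemma cont_comp (g : V3 -> R) (gam : R -> V3) s :
  (forall p, cont_at g p) ->
  continuous (fun t => vx (gam t)) s -> continuous (fun t => vy (gam t)) s ->
  continuous (fun t => vz (gam t)) s ->
  continuous (fun t => g (gam t)) s.
Proof.
  intros Hg Hx Hy Hz.
  apply filterlim_locally. intros eps.
  destruct (Hg (gam s) eps (cond_pos eps)) as [d [Hd Hq]].
  assert (Hd2 : 0 < d / 2) by lra.
  apply filterlim_locally with (eps := mkposreal _ Hd2) in Hx.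
  apply filterlim_locally with (eps := mkposreal _ Hd2) in Hy.
  apply filterlim_locally with (eps := mkposreal _ Hd2) in Hz.
  generalize (filter_and _ _ Hx (filter_and _ _ Hy Hz)).
  apply filter_imp. intros t [H1 [H2 H3]].
  rewrite ball_R in *. simpl in *. apply Hq.
  unfold vnorm, dot, vsub; simpl.
  apply Rabs_def2 in H1. apply Rabs_def2 in H2. apply Rabs_def2 in H3.
  rewrite <- (sqrt_Rsqr d) by lra.
  apply sqrt_lt_1_alt. split.
  - apply Rplus_le_le_0_compat; [apply Rplus_le_le_0_compat|]; apply Rle_0_sqr.
  - unfold Rsqr. nra.
Qed.

Lemma eta3 (v : V3) : mkV3 (vx v) (vy v) (vz v) = v.
Proof. destruct v; reflexivity. Qed.

Lemma cont_D (w : V3 -> V3) (a c : V3) (gam : R -> V3) s :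
  smooth_field w ->
  (forall s j, is_derive (fun t => coord j (gam t)) s (coord j (w (gam s)))) ->
  (forall s, gam s <> a) -> (forall s, gam s <> c) ->
  continuous (fun s => Dterm w a (gam s) c) s.
Proof.
  intros Hsm Hd Ha Hc.
  assert (Ex : forall j, ex_derive (fun t => coord j (gam t)) s) by (intros j; eexists; apply Hd).
  assert (E0 : ex_derive (fun t => vx (gam t)) s) by apply (Ex I0).
  assert (E1 : ex_derive (fun t => vy (gam t)) s) by apply (Ex I1).
  assert (E2 : ex_derive (fun t => vz (gam t)) s) by apply (Ex I2).
  assert (C0 : continuous (fun t => vx (gam t)) s) by (apply (@ex_derive_continuous R_AbsRing R_NormedModule); exact E0).
  assert (C1 : continuous (fun t => vy (gam t)) s) by (apply (@ex_derive_continuous R_AbsRing R_NormedModule); exact E1).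
  assert (C2 : continuous (fun t => vz (gam t)) s) by (apply (@ex_derive_continuous R_AbsRing R_NormedModule); exact E2).
  assert (F : forall E, continuous (fun t => DE' (w a) E (w c) a (gam t) c) s).
  { intros E. apply (@ex_derive_continuous R_AbsRing R_NormedModule).
    eapply ex_derive_ext; [|apply (DE'_exd (w a) E (w c) a c (fun t => vx (gam t)) (fun t => vy (gam t)) (fun t => vz (gam t)) s)]; auto.
    all: try (intros t; rewrite eta3; reflexivity); rewrite eta3; auto. }
  assert (W : forall j, continuous (fun t => coord j (w (gam t))) s).
  { intros j. apply (cont_comp (fun p => coord j (w p))); auto. apply (proj1 (Hsm j nil)). }
  apply (continuous_ext (fun t => plus (plus (mult (coord I0 (w (gam t))) (DE' (w a) (basis I0) (w c) a (gam t) c))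
                                           (mult (coord I1 (w (gam t))) (DE' (w a) (basis I1) (w c) a (gam t) c)))
                                     (mult (coord I2 (w (gam t))) (DE' (w a) (basis I2) (w c) a (gam t) c)))).
  2:{ apply (@continuous_plus R_UniformSpace R_AbsRing R_NormedModule);
      [apply (@continuous_plus R_UniformSpace R_AbsRing R_NormedModule)|];
      apply (@continuous_mult R_UniformSpace R_AbsRing); auto. }
  intros t. rewrite Dterm_eq by auto. rewrite DE_DE', (DE'_lin _ (w (gam t))) by auto.
  reflexivity.
Qed.

Theorem proposition2 (w : V3 -> V3) (a c : V3) (gam : R -> V3) (T : R) :
  smooth_field w ->
  div_free w ->
  0 < T ->
  (forall s, gam (s + T) = gam s) ->
  (forall s j, is_derive (fun t => coord j (gam t)) s (coord j (w (gam s)))) ->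
  (forall s, gam s <> a) ->
  (forall s, gam s <> c) ->
  a <> c ->
  RInt (fun s => Dterm w a (gam s) c) 0 T
  = - RInt (fun s => Dterm w c (gam s) a) 0 T.
Proof.
  intros Hsm _ HT Hper Hd Ha Hc _.
  assert (Ex1 : ex_RInt (fun s => Dterm w a (gam s) c) 0 T).
  { apply (@ex_RInt_continuous R_CompleteNormedModule). intros; apply cont_D; auto. }
  assert (Ex2 : ex_RInt (fun s => Dterm w c (gam s) a) 0 T).
  { apply (@ex_RInt_continuous R_CompleteNormedModule). intros; apply cont_D; auto. }
  assert (Hi : is_RInt (fun s => plus (Dterm w a (gam s) c) (Dterm w c (gam s) a)) 0 T
                 (minus (G w a c (gam T)) (G w a c (gam 0)))).
  { apply (@is_RInt_derive R_CompleteNormedModule (fun t => G w a c (gam t))).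
    - intros s _.
      assert (H := dG_gen w a c (fun t => vx (gam t)) (fun t => vy (gam t)) (fun t => vz (gam t)) s
                   (vx (w (gam s))) (vy (w (gam s))) (vz (w (gam s))) (Hd s I0) (Hd s I1) (Hd s I2)).
      rewrite !eta3 in H.
      specialize (H ltac:(reflexivity) (Ha s) (Hc s)).
      rewrite <- !Dterm_eq in H by (apply not_eq_sym; auto).
      eapply is_derive_ext; [|exact H]. intros t; simpl; rewrite eta3; reflexivity.
    - intros s _. apply (@continuous_plus R_UniformSpace R_AbsRing R_NormedModule); apply cont_D; auto. }
  assert (HT0 : gam T = gam 0) by (rewrite <- (Rplus_0_l T); apply Hper).
  rewrite HT0, minus_eq_zero in Hi.
  apply (@is_RInt_unique R_CompleteNormedModule) in Hi. rewrite (@RInt_plus R_CompleteNormedModule) in Hi by auto.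
  unfold plus, zero in Hi; simpl in Hi. lra.
Qed.
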